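(* Let $\Phi:\mathbb{R}\to\mathbb{R}$ be smooth and convex, and let $r_\pm,v_\pm,\sigma\in\mathbb{R}$ with $\sigma\neq0$, $r_-\neq r_+$, $\sigma[\![r]\!]+[\![v]\!]=0$ and $\sigma[\![v]\!]+[\![\Phi'(r)]\!]=0$. Then there is a one-to-one correspondence between fronts $(R,V)$ with speed $\sigma$ and asymptotic states $(r_\pm,v_\pm)$ and bounded measurable solutions $W$ of $$W=\mathcal{A}\widehat\Phi'(\mathcal{A}W)\quad\text{with}\quad W(\varphi)\to\pm1 \text{ as }\varphi\to\pm\infty,$$ given by $V=\langle v\rangle+\tfrac12[\![v]\!]W$ and $R(\varphi-\tfrac12)=\langle r\rangle+\tfrac12[\![r]\!](\mathcal{A}W)(\varphi)$.
   Context: A front with speed $\sigma$ and asymptotic states $(r_\pm,v_\pm)$ is a pair $R,V\in C^1(\mathbb{R})\cap L^\infty(\mathbb{R})$ with $R(\varphi)\to r_\pm$, $V(\varphi)\to v_\pm$ as $\varphi\to\pm\infty$, solving $\sigma R'(\varphi)+V(\varphi+1)-V(\varphi)=0$ and $\sigma V'(\varphi)+\Phi'(R(\varphi))-\Phi'(R(\varphi-1))=0$ for all $\varphi$. Notation: $[\![\psi]\!]=\psi(r_+,v_+)-\psi(r_-,v_-)$, $\langle\psi\rangle=\tfrac12(\psi(r_+,v_+)+\psi(r_-,v_-))$. The averaging operator is $(\mathcal{A}U)(\varphi)=\int_{\varphi-1/2}^{\varphi+1/2}U(s)\,ds$. The normalised potential is $\widehat\Phi(w)=\frac{4}{[\![\Phi'(r)]\!][\![r]\!]}\Phi(\langle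 r\rangle+\tfrac12[\![r]\!]w)-\frac{2\langle\Phi'(r)\rangle}{[\![\Phi'(r)]\!]}w$ (note $[\![\Phi'(r)]\!]=\sigma^2[\![r]\!]\neq0$). *)

(* Defs.v *)
From HB Require Import structures.
From mathcomp Require Import all_boot all_order all_algebra.
From mathcomp Require Import all_classical all_reals all_analysis.
Set Implicit Arguments. Unset Strict Implicit. Unset Printing Implicit Defensive.
Import Order.TTheory GRing.Theory Num.Theory.
Import numFieldNormedType.Exports.
Local Open Scope classical_set_scope.
Local Open Scope ring_scope.

Section Defs.
Variable R : realType.

Definition smooth (Phi : R -> R) : Prop :=
  forall (n : nat) (x : R), derivable (derive1n n Phi) x 1.

Definition convexR (Phi : R -> R) : Prop :=
  forall (x y t : R), 0 <= t <= 1 ->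
    Phi (t * x + (1 - t) * y) <= t * Phi x + (1 - t) * Phi y.

Definition bounded_fun (f : R -> R) : Prop := exists M : R, forall x, `|f x| <= M.

Definition C1 (f : R -> R) : Prop :=
  (forall x, derivable f x 1) /\ continuous (derive1 f).

Definition front (Phi : R -> R) (sigma rm rp vm vp : R) (Rf Vf : R -> R) : Prop :=
  [/\ C1 Rf /\ C1 Vf, bounded_fun Rf /\ bounded_fun Vf,
      (Rf x @[x --> -oo] --> rm) /\ (Rf x @[x --> +oo] --> rp),
      (Vf x @[x --> -oo] --> vm) /\ (Vf x @[x --> +oo] --> vp) &
      (forall phi, sigma * derive1 Rf phi + Vf (phi + 1) - Vf phi = 0) /\
      (forall phi, sigma * derive1 Vf phi + derive1 Phi (Rf phi)
                     - derive1 Phi (Rf (phi - 1)) = 0)].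

Definition avg (U : R -> R) (phi : R) : R :=
  Rintegral (@lebesgue_measure R) `[phi - 2^-1, phi + 2^-1] U.

Definition jump (a_m a_p : R) : R := a_p - a_m.
Definition mean (a_m a_p : R) : R := 2^-1 * (a_p + a_m).

Definition Phihat (Phi : R -> R) (rm rp : R) (w : R) : R :=
  4 / (jump (derive1 Phi rm) (derive1 Phi rp) * jump rm rp)
    * Phi (mean rm rp + 2^-1 * jump rm rp * w)
  - 2 * mean (derive1 Phi rm) (derive1 Phi rp) / jump (derive1 Phi rm) (derive1 Phi rp) * w.

Definition Wsol (Phi : R -> R) (rm rp : R) (W : R -> R) : Prop :=
  [/\ measurable_fun setT W, bounded_fun W,
      (forall phi, W phi = avg (fun s => derive1 (Phihat Phi rm rp) (avg W s)) phi),
      W x @[x --> -oo] --> (-1 : R) & W x @[x --> +oo] --> (1 : R)].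

Definition V_of (vm vp : R) (W : R -> R) : R -> R :=
  fun phi => mean vm vp + 2^-1 * jump vm vp * W phi.
(* R(phi - 1/2) = <r> + [[r]]/2 (A W)(phi), i.e. R(x) = <r> + [[r]]/2 (A W)(x + 1/2) *)
Definition R_of (rm rp : R) (W : R -> R) : R -> R :=
  fun x => mean rm rp + 2^-1 * jump rm rp * avg W (x + 2^-1).

End Defs.

(* Main.v *)
Require Import Defs.
From HB Require Import structures.
From mathcomp Require Import all_boot all_order all_algebra.
From mathcomp Require Import all_classical all_reals all_analysis.
From mathcomp Require Import ring lra measurable_realfun.
Import Order.TTheory GRing.Theory Num.Theory.
Import numFieldNormedType.Exports.
Local Open Scope classical_set_scope.
Local Open Scope ring_scope.


Lemma mu_itv {R : realType} (a b : R) : a <= b -> (@lebesgue_measure R) `[a, b] = (b - a)%:E.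
Proof.
move=> ab. rewrite lebesgue_measure_itv/= lte_fin.
case: ltgtP ab => //. by move=> -> _; rewrite subrr.
Qed.

Lemma half_len {R : realType} (y : R) : y + 2^-1 - (y - 2^-1) = 1.
Proof. by field. Qed.

Lemma Rint_cst_itv {R : realType} (a b l : R) : a <= b ->
  \int[@lebesgue_measure R]_(x in `[a, b]) l = l * (b - a).
Proof.
move=> ab; rewrite Rintegral_cst//.
by rewrite -[X in fine X]/(@lebesgue_measure R `[a, b]) mu_itv.
Qed.

Section Aux.
Context {R : realType}.
Notation mu := (@lebesgue_measure R).

Lemma int_bnd (f : R -> R) (a b M : R) : measurable_fun setT f ->
  (forall x, a <= x <= b -> `|f x| <= M) -> mu.-integrable `[a, b] (EFin \o f).
Proof.
move=> mf fM; apply: measurable_bounded_integrable => //.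
- by apply: compact_finite_measure; exact: segment_compact.
- exact: measurable_funS mf.
- exists M; split; first exact: num_real.
  move=> N MN x /= xab; apply: le_trans (fM x _) (ltW MN).
  by move: xab; rewrite in_itv.
Qed.

Lemma cont_int (f : R -> R) (a b : R) : continuous f -> mu.-integrable `[a, b] (EFin \o f).
Proof.
move=> cf; apply: continuous_compact_integrable; first exact: segment_compact.
by apply: continuous_subspaceT.
Qed.

Lemma avg_close (f : R -> R) (l e y : R) : measurable_fun setT f ->
  (forall s, y - 2^-1 <= s <= y + 2^-1 -> `|l - f s| <= e) ->
  `|l - avg f y| <= e.
Proof.
move=> mf H.
have intf : mu.-integrable `[y - 2^-1, y + 2^-1] (EFin \o f).
  apply: (@int_bnd _ _ _ (`|l| + e)) => // x /H lfx.
  have -> : f x = l - (l - f x) by rewrite subKr.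
  by rewrite (le_trans (ler_normB _ _))// lerD2l.
have mI : measurable (`[y - 2^-1, y + 2^-1] : set R) by [].
have hl : l = \int[mu]_(x in `[y - 2^-1, y + 2^-1]) l.
  rewrite Rint_cst_itv; last by rewrite lerD2l; apply: (@le_trans _ _ 0); rewrite ?oppr_le0 invr_ge0 ler0n.
  by rewrite half_len mulr1.
rewrite /avg {1}hl -RintegralB//; last first.
  by apply: (@int_bnd _ _ _ `|l|) => //; exact: measurable_cst.
have mg : measurable_fun setT (fun x => l - f x).
  by apply: measurable_funB => //; exact: measurable_cst.
have mg' : measurable_fun setT (fun x => `|l - f x|).
  exact: measurableT_comp mg.
have i1 : mu.-integrable `[y - 2^-1, y + 2^-1] (EFin \o (fun x => l - f x)).
  by apply: (@int_bnd _ _ _ e) => // x /H.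
have i2 : mu.-integrable `[y - 2^-1, y + 2^-1] (EFin \o (fun x => `|l - f x|)).
  by apply: (@int_bnd _ _ _ e) => // x /H; rewrite normr_id.
have i3 : mu.-integrable `[y - 2^-1, y + 2^-1] (EFin \o (fun x => e)).
  by apply: (@int_bnd _ _ _ `|e|) => //; exact: measurable_cst.
have h1 : `|\int[mu]_(x in `[y - 2^-1, y + 2^-1]) (l - f x)| <= \int[mu]_(x in `[y - 2^-1, y + 2^-1]) `|l - f x|.
  by apply: le_normr_Rintegral.
have h2 : \int[mu]_(x in `[y - 2^-1, y + 2^-1]) `|l - f x| <= \int[mu]_(x in `[y - 2^-1, y + 2^-1]) e.
  by apply: le_Rintegral => // x /=; rewrite in_itv/=; apply: H.
apply: (le_trans h1); apply: (le_trans h2).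
rewrite Rint_cst_itv; last by rewrite lerD2l; apply: (@le_trans _ _ 0); rewrite ?oppr_le0 invr_ge0 ler0n.
by rewrite half_len mulr1.
Qed.


Definition I (f : R -> R) (s t : R) := \int[mu]_(x in `[s, t]) f x.

Lemma I_split (f : R -> R) (s u t : R) : mu.-integrable `[s, t] (EFin \o f) ->
  s <= u -> u <= t -> I f s t = I f s u + I f u t.
Proof.
move=> intf su ut.
have := @Rintegral_itvB R f (BLeft s) (BRight t) u intf.
rewrite !bnd_simp => /(_ su ut) h.
rewrite Rintegral_itv_obnd_cbnd in h; last first.
  by apply: integrableS intf => //; apply: subset_itvr; rewrite bnd_simp.
by rewrite /I -h addrC subrK.
Qed.

Lemma I_bound (f : R -> R) (s t M : R) : measurable_fun setT f ->
  (forall x, `|f x| <= M) -> s <= t -> `|I f s t| <= M * (t - s).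
Proof.
move=> mf fM st.
have mI : measurable (`[s, t] : set R) by [].
have i1 : mu.-integrable `[s, t] (EFin \o f) by apply: (@int_bnd _ _ _ M).
have mg' : measurable_fun setT (fun x => `|f x|) by exact: measurableT_comp mf.
have i2 : mu.-integrable `[s, t] (EFin \o (fun x => `|f x|)).
  by apply: (@int_bnd _ _ _ M) => // x _; rewrite normr_id.
have i3 : mu.-integrable `[s, t] (EFin \o (fun x => M)).
  by apply: (@int_bnd _ _ _ `|M|) => //; exact: measurable_cst.
have h1 : `|\int[mu]_(x in `[s, t]) (f x)| <= \int[mu]_(x in `[s, t]) `|f x|.
  by apply: le_normr_Rintegral.
have h2 : \int[mu]_(x in `[s, t]) `|f x| <= \int[mu]_(x in `[s, t]) M.
  by apply: le_Rintegral => // x _.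
by rewrite /I (le_trans h1 (le_trans h2 _))// Rint_cst_itv.
Qed.

Lemma avg_I (f : R -> R) x : avg f x = I f (x - 2^-1) (x + 2^-1).
Proof. by []. Qed.

Lemma avg_cvgy (f : R -> R) (l : R) : measurable_fun setT f ->
  f x @[x --> +oo] --> l -> avg f x @[x --> +oo] --> l.
Proof.
move=> mf /cvgrPdist_le fl; apply/cvgrPdist_le => e e0.
case: (fl e e0) => A [Ar HA].
exists (A + 1); split; first exact: num_real.
move=> y Ay; apply: avg_close => // s /andP[s1 s2]; apply: HA.
have h2 : 2^-1 < (1 : R) by rewrite invf_lt1 ?ltr1n ?ltr0n.
lra.
Qed.

Lemma avg_cvgNy (f : R -> R) (l : R) : measurable_fun setT f ->
  f x @[x --> -oo] --> l -> avg f x @[x --> -oo] --> l.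
Proof.
move=> mf /cvgrPdist_le fl; apply/cvgrPdist_le => e e0.
case: (fl e e0) => A [Ar HA].
exists (A - 1); split; first exact: num_real.
move=> y Ay; apply: avg_close => // s /andP[s1 s2]; apply: HA.
have h2 : 2^-1 < (1 : R) by rewrite invf_lt1 ?ltr1n ?ltr0n.
lra.
Qed.


Lemma avg_lip1 (f : R -> R) M x y : measurable_fun setT f ->
  (forall x, `|f x| <= M) -> x <= y -> y <= x + 1 ->
  `|avg f y - avg f x| <= M * (y - x) + M * (y - x).
Proof.
move=> mf fM xy yx1.
have ib : forall s t, mu.-integrable `[s, t] (EFin \o f).
  by move=> s t; apply: (@int_bnd _ _ _ M).
have h2 : 2^-1 + 2^-1 = (1 : R) by field.
have e1 := @I_split f (x - 2^-1) (y - 2^-1) (x + 2^-1) (ib _ _).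
have e2 := @I_split f (y - 2^-1) (x + 2^-1) (y + 2^-1) (ib _ _).
rewrite !avg_I e1 ?e2; try lra.
have -> : forall a b c : R, a + b - (c + a) = b - c by move=> a b c; ring.
apply: (le_trans (ler_normB _ _)).
have b1 := @I_bound f (x + 2^-1) (y + 2^-1) M mf fM (_ : x + 2^-1 <= y + 2^-1).
have b2 := @I_bound f (x - 2^-1) (y - 2^-1) M mf fM (_ : x - 2^-1 <= y - 2^-1).
have q1 : y + 2^-1 - (x + 2^-1) = y - x by ring.
have q2 : y - 2^-1 - (x - 2^-1) = y - x by ring.
rewrite q1 in b1; rewrite q2 in b2.
apply: lerD; [apply: b1 | apply: b2]; lra.
Qed.

Lemma avg_cont (f : R -> R) M : measurable_fun setT f ->
  (forall x, `|f x| <= M) -> continuous (avg f).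
Proof.
move=> mf fM x.
have M0 : 0 <= M by apply: le_trans (fM 0).
apply/cvgrPdist_le => e e0.
have d0 : 0 < Num.min 1 (e / (2 * M + 1)).
  by rewrite lt_min ltr01 /= divr_gt0// ltr_wpDl// mulr_ge0.
exists (Num.min 1 (e / (2 * M + 1))) => // y /=.
rewrite lt_min => /andP[y1 ye].
have key : `|avg f x - avg f y| <= 2 * M * `|x - y|.
  have [xy|yx] := leP x y.
    rewrite -normrN opprB (le_trans (@avg_lip1 f M _ _ mf fM xy _)) //.
      by move: y1; rewrite ltr_norml; lra.
    by rewrite distrC ger0_norm ?subr_ge0 //; lra.
  rewrite (le_trans (@avg_lip1 f M _ _ mf fM (ltW yx) _)) //.
    by move: y1; rewrite ltr_norml; lra.
  by rewrite ger0_norm ?subr_ge0 ?(ltW yx) //; lra.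
apply: (le_trans key).
have : 2 * M * `|x - y| <= 2 * M * (e / (2 * M + 1)).
  by apply: ler_wpM2l; [rewrite mulr_ge0 | exact: ltW].
move/le_trans; apply.
rewrite mulrA ler_pdivrMr ?ltr_wpDl ?mulr_ge0 //.
nra.
Qed.

Lemma is_derive_sh (F : R -> R) (x c d : R) : is_derive (x + c) 1 F d ->
  is_derive x 1 (fun y => F (y + c)) d.
Proof.
move=> H.
have H2 : is_derive x 1 (shift c : R -> R) 1 := is_derive_shift x 1 c.
have := @is_derive1_comp R F (shift c) x d 1 H H2.
by rewrite mulr1.
Qed.

Lemma avg_derive (f : R -> R) (x : R) : continuous f ->
  is_derive x 1 (avg f) (f (x + 2^-1) - f (x - 2^-1)).
Proof.
move=> cf.
have h2 : 2^-1 + 2^-1 = (1 : R) by field.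
have h0 : 0 < (2^-1 : R) by rewrite invr_gt0 ltr0n.
have dF : forall t, x - 1 < t -> t < x + 1 -> is_derive t 1 (I f (x - 1)) (f t).
  move=> t at1 tu.
  have [d1 d2] := @continuous_FTC1_closed R f (x - 1) t (x + 1) tu (@cont_int f (x - 1) (x + 1) cf) at1 (cf t).
  by apply: DeriveDef => //; rewrite -derive1E.
have eq : \forall y \near x,
    (fun y => I f (x - 1) (y + 2^-1) - I f (x - 1) (y - 2^-1)) y = avg f y.
  exists (2^-1) => //= y; rewrite /ball_ /= => hy.
  have hy' : -(2^-1) < x - y < 2^-1 by rewrite -ltr_norml.
  case/andP: hy' => hy1 hy2.
  rewrite (@I_split f (x - 1) (y - 2^-1) (y + 2^-1)); try lra.
    by rewrite addrAC subrr add0r.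
  exact: cont_int.
apply: (near_eq_is_derive eq).
apply: is_deriveB.
  apply: is_derive_sh; apply: dF; lra.
apply: is_derive_sh; apply: dF; lra.
Qed.

Lemma is_derive_aff (u : R -> R) (x a b d : R) : is_derive x 1 u d ->
  is_derive x 1 (fun y => a + b * u y) (b * d).
Proof.
move=> H.
have H1 : is_derive x 1 (fun y => b * u y) (b * d).
  have := @is_deriveZ R R R u b x 1 d H.
  by [].
have := @is_deriveD R R R (cst a) (fun y => b * u y) x 1 0 (b * d) (is_derive_cst a x 1) H1.
by rewrite add0r.
Qed.

Lemma cvg_aff {T : Type} (F : set_system T) {FF : Filter F} (u : T -> R) (l a b : R) :
  u @ F --> l -> (fun x => a + b * u x) @ F --> a + b * l.
Proof.
move=> ul; apply: cvgD; first exact: cvg_cst.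
exact: cvgMr.
Qed.

Lemma bnd_aff (u : R -> R) (M a b : R) : (forall x, `|u x| <= M) ->
  exists M', forall x, `|a + b * u x| <= M'.
Proof.
move=> uM; exists (`|a| + `|b| * M) => x.
rewrite (le_trans (ler_normD _ _))// lerD2l normrM.
by apply: ler_wpM2l.
Qed.

Lemma cont_aff (u : R -> R) (a b : R) : continuous u ->
  continuous (fun x => a + b * u x).
Proof. by move=> cu x; apply: cvg_aff; exact: cu. Qed.

Lemma cont_comp (u v : R -> R) : continuous u -> continuous v ->
  continuous (fun x => v (u x)).
Proof. by move=> cu cv x; apply: continuous_comp; [exact: cu | exact: cv]. Qed.

Lemma cont_shift (u : R -> R) (c : R) : continuous u -> continuous (fun x => u (x + c)).
Proof.
move=> cu; apply: (@cont_comp (fun x => x + c)) => // x.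
by apply: cvgD; [exact: cvg_id | exact: cvg_cst].
Qed.

Lemma cont_B (u v : R -> R) (b : R) : continuous u -> continuous v ->
  continuous (fun x => b * (u x - v x)).
Proof.
move=> cu cv x; apply: cvgMr.
by apply: cvgB; [exact: cu | exact: cv].
Qed.

Lemma der_cont (f df : R -> R) : (forall x : R, is_derive x 1 f (df x)) -> continuous f.
Proof.
move=> H x; apply: differentiable_continuous; apply/derivable1_diffP.
by case: (H x).
Qed.

Lemma der1_val (f : R -> R) (x d : R) : is_derive x 1 f d -> derive1 f x = d.
Proof. by move=> H; rewrite derive1E derive_val. Qed.

Lemma C1_of (f df : R -> R) : (forall x : R, is_derive x 1 f (df x)) -> continuous df -> C1 f.
Proof.
move=> H cdf; split; first by move=> x; case: (H x).
have -> : derive1 f = df by apply/funext => x; exact: der1_val.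
exact: cdf.
Qed.

Lemma zero_of_der (D : R -> R) : (forall x : R, is_derive x 1 D 0) ->
  D x @[x --> +oo] --> 0 -> forall x, D x = 0.
Proof.
move=> H lim0 x.
have cst : D = cst (D x) by apply/funext => y; apply: is_derive_0_is_cst.
rewrite cst in lim0.
have := cvg_unique _ lim0 (cvg_cst (D x)).
by move=> ->.
Qed.


Lemma avg_cvgy_sh (f : R -> R) (l c : R) : measurable_fun setT f ->
  f x @[x --> +oo] --> l -> avg f (x + c) @[x --> +oo] --> l.
Proof.
move=> mf /cvgrPdist_le fl; apply/cvgrPdist_le => e e0.
case: (fl e e0) => A [Ar HA].
exists (A - c + 1); split; first exact: num_real.
move=> y Ay; apply: avg_close => // s /andP[s1 s2]; apply: HA.
have h2 : 2^-1 < (1 : R) by rewrite invf_lt1 ?ltr1n ?ltr0n.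
lra.
Qed.

Lemma avg_cvgNy_sh (f : R -> R) (l c : R) : measurable_fun setT f ->
  f x @[x --> -oo] --> l -> avg f (x + c) @[x --> -oo] --> l.
Proof.
move=> mf /cvgrPdist_le fl; apply/cvgrPdist_le => e e0.
case: (fl e e0) => A [Ar HA].
exists (A - c - 1); split; first exact: num_real.
move=> y Ay; apply: avg_close => // s /andP[s1 s2]; apply: HA.
have h2 : 2^-1 < (1 : R) by rewrite invf_lt1 ?ltr1n ?ltr0n.
lra.
Qed.

Lemma avg_bnd (f : R -> R) (M : R) : measurable_fun setT f ->
  (forall x, `|f x| <= M) -> forall x, `|avg f x| <= M.
Proof.
move=> mf fM x; rewrite -normrN -(add0r (- _)).
by apply: avg_close => // s _; rewrite sub0r normrN.
Qed.


Lemma Phihat_der (Phi : R -> R) (rm rp : R) :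
  (forall x : R, is_derive x 1 Phi (derive1 Phi x)) ->
  jump (derive1 Phi rm) (derive1 Phi rp) != 0 -> jump rm rp != 0 ->
  forall w, derive1 (Phihat Phi rm rp) w =
    - (2 / jump (derive1 Phi rm) (derive1 Phi rp) * mean (derive1 Phi rm) (derive1 Phi rp))
    + 2 / jump (derive1 Phi rm) (derive1 Phi rp) * derive1 Phi (mean rm rp + 2^-1 * jump rm rp * w).
Proof.
move=> dP J0 j0 w.
set Jp := jump (derive1 Phi rm) (derive1 Phi rp).
set mP := mean (derive1 Phi rm) (derive1 Phi rp).
set jr := jump rm rp.
set m := mean rm rp.
have Hg : is_derive w 1 (fun y => m + 2^-1 * jr * y) (2^-1 * jr * 1).
  exact: (@is_derive_aff id w m (2^-1 * jr) 1 (is_derive_id w 1)).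
have Hc := @is_derive1_comp R Phi (fun y => m + 2^-1 * jr * y) w _ _ (dP _) Hg.
have H1 := @is_deriveZ R R R _ (4 / (Jp * jr)) w 1 _ Hc.
have H2 := @is_deriveZ R R R id (2 * mP / Jp) w 1 _ (is_derive_id w 1).
have H3 := is_deriveB H1 H2.
rewrite (@der1_val _ _ _ H3).
have sc : forall a b : R, a *: b = a * b by []. rewrite !sc mulr1 mulr1. field.
by apply/andP; split.
Qed.

End Aux.


Lemma combine {R : realType} {s V a b A B jv Jp mP : R} : s != 0 -> jv != 0 ->
  Jp = -(s * jv) -> s * V + a - b = 0 -> a = Jp / 2 * A + mP -> b = Jp / 2 * B + mP ->
  2 / jv * V - (A - B) = 0.
Proof.
move=> s0 j0 eJ h ea eb; rewrite ea eb eJ in h.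
have hv : V = jv / 2 * (A - B).
  apply: (mulfI s0); rewrite -[LHS]subr0 -h; ring.
by rewrite hv; field.
Qed.

Lemma alg1 {R : realType} {s jr jv Jp A B mP : R} : jv = -(s * jr) -> Jp = -(s * jv) ->
  s * (2^-1 * jv * (A - B)) + (Jp / 2 * A + mP) - (Jp / 2 * B + mP) = 0.
Proof. by move=> -> ->; field. Qed.

Theorem lemma2p2 (R : realType) (Phi : R -> R) (rm rp vm vp sigma : R) :
  smooth Phi -> convexR Phi ->
  sigma != 0 -> rm != rp ->
  sigma * jump rm rp + jump vm vp = 0 ->
  sigma * jump vm vp + jump (derive1 Phi rm) (derive1 Phi rp) = 0 ->
  (forall W : R -> R, Wsol Phi rm rp W ->
     front Phi sigma rm rp vm vp (R_of rm rp W) (V_of vm vp W)) /\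
  (forall Rf Vf : R -> R, front Phi sigma rm rp vm vp Rf Vf ->
     exists! W : R -> R, Wsol Phi rm rp W /\ Rf = R_of rm rp W /\ Vf = V_of vm vp W).
Proof.
move=> sm _ s0 rmp e1 e2.
have jr0 : jump rm rp != 0 by rewrite /jump subr_eq0 eq_sym.
have ejv : jump vm vp = - (sigma * jump rm rp) by apply/eqP; rewrite -addr_eq0 addrC e1.
have jv0 : jump vm vp != 0 by rewrite ejv oppr_eq0 mulf_neq0.
have eJ : jump (derive1 Phi rm) (derive1 Phi rp) = - (sigma * jump vm vp)
  by apply/eqP; rewrite -addr_eq0 addrC e2.
have J0 : jump (derive1 Phi rm) (derive1 Phi rp) != 0 by rewrite eJ oppr_eq0 mulf_neq0.
have dP : forall x : R, is_derive x 1 Phi (derive1 Phi x).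
  by move=> x; apply: DeriveDef; [exact: (sm 0%N x) | rewrite derive1E].
have cdP : continuous (derive1 Phi).
  by move=> x; apply: differentiable_continuous; apply/derivable1_diffP; exact: (sm 1%N x).
set Jp := jump (derive1 Phi rm) (derive1 Phi rp) in eJ J0 e2 *.
set mP := mean (derive1 Phi rm) (derive1 Phi rp).
set ph := fun w => - (2 / Jp * mP) + 2 / Jp * derive1 Phi (mean rm rp + 2^-1 * jump rm rp * w).
have PhE : forall w, derive1 (Phihat Phi rm rp) w = ph w by exact: Phihat_der.
have ph_cont : continuous ph.
  rewrite /ph; apply: cont_aff; apply: (@cont_comp R (fun w => mean rm rp + 2^-1 * jump rm rp * w) (derive1 Phi)) => //.
  by apply: cont_aff => x; exact: cvg_id.
have dPE : forall w, derive1 Phi (mean rm rp + 2^-1 * jump rm rp * w) = Jp / 2 * ph w + mP.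
  by move=> w; rewrite /ph; field.
have ph1 : ph 1 = 1.
  rewrite /ph mulr1.
  have -> : mean rm rp + 2^-1 * jump rm rp = rp by rewrite /mean /jump; field.
  move: J0; rewrite /mP /mean /Jp /jump => J0; field.
  exact: J0.
have phm1 : ph (-1) = -1.
  rewrite /ph mulrN1.
  have -> : mean rm rp - 2^-1 * jump rm rp = rm by rewrite /mean /jump; field.
  move: J0; rewrite /mP /mean /Jp /jump => J0; field.
  exact: J0.
have hh1 : forall x : R, x + 2^-1 + 2^-1 = x + 1 by move=> x; field.
have hh2 : forall x : R, x + 2^-1 - 2^-1 = x by move=> x; field.
have hh3 : forall x : R, x - 1 + 2^-1 = x - 2^-1 by move=> x; field.
have Ep : mean rm rp + 2^-1 * jump rm rp * 1 = rp by rewrite /mean /jump; field.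
have Em : mean rm rp + 2^-1 * jump rm rp * (-1) = rm by rewrite /mean /jump; field.
split.
- move=> W [mW [M HM] fixW Wm Wp].
  have A_cont : continuous (avg W) by exact: (@avg_cont R W M mW HM).
  pose g := fun s => ph (avg W s).
  have fixW' : forall x, W x = avg g x.
    move=> x; rewrite fixW; congr (avg _ x); apply/funext => s; exact: PhE.
  have g_cont : continuous g by exact: (@cont_comp R (avg W) ph A_cont ph_cont).
  have W_der : forall x : R, is_derive x 1 W (g (x + 2^-1) - g (x - 2^-1)).
    move=> x; have -> : W = avg g by apply/funext => y; exact: fixW'.
    exact: avg_derive.
  have W_cont : continuous W by exact: der_cont W_der.
  have A_der : forall x : R, is_derive x 1 (avg W) (W (x + 2^-1) - W (x - 2^-1)).
    by move=> x; exact: avg_derive.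
  have R_der : forall x : R, is_derive x 1 (R_of rm rp W) (2^-1 * jump rm rp * (W (x + 1) - W x)).
    move=> x.
    have H := @is_derive_sh R (avg W) x (2^-1) _ (A_der (x + 2^-1)).
    have := @is_derive_aff R _ x (mean rm rp) (2^-1 * jump rm rp) _ H.
    by rewrite hh1 hh2.
  have V_der : forall x : R, is_derive x 1 (V_of vm vp W) (2^-1 * jump vm vp * (g (x + 2^-1) - g (x - 2^-1))).
    by move=> x; exact: (@is_derive_aff R W x _ _ _ (W_der x)).
  split.
  + split; [apply: (@C1_of R _ (fun x => 2^-1 * jump rm rp * (W (x + 1) - W x)) R_der) | apply: (@C1_of R _ (fun x => 2^-1 * jump vm vp * (g (x + 2^-1) - g (x - 2^-1))) V_der)].
      by apply: cont_B => //; apply: cont_shift.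
    by apply: cont_B; apply: cont_shift.
  + split.
      apply: bnd_aff => x; exact: (@avg_bnd R W M mW HM).
    exact: bnd_aff HM.
  + split.
      have H := @cvg_aff R _ _ _ _ _ (mean rm rp) (2^-1 * jump rm rp) (@avg_cvgNy_sh R W (-1) (2^-1) mW Wm).
      by rewrite Em in H; exact: H.
    have H := @cvg_aff R _ _ _ _ _ (mean rm rp) (2^-1 * jump rm rp) (@avg_cvgy_sh R W 1 (2^-1) mW Wp).
    by rewrite Ep in H; exact: H.
  + split.
      have H := @cvg_aff R _ _ _ _ _ (mean vm vp) (2^-1 * jump vm vp) Wm.
      rewrite (_ : mean vm vp + 2^-1 * jump vm vp * -1 = vm) in H; first exact: H.
      by rewrite /mean /jump; field.
    have H := @cvg_aff R _ _ _ _ _ (mean vm vp) (2^-1 * jump vm vp) Wp.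
    rewrite (_ : mean vm vp + 2^-1 * jump vm vp * 1 = vp) in H; first exact: H.
    by rewrite /mean /jump; field.
  + split => phi.
      rewrite (@der1_val R _ _ _ (R_der phi)) /V_of ejv; ring.
    rewrite (@der1_val R _ _ _ (V_der phi)) /R_of hh3 !dPE /g.
    exact: (alg1 ejv eJ).
- move=> Rf Vf [[[dR cR] [dV cV]] [[MR HR] [MV HV]] [Rm Rp] [Vm Vp] [eqR eqV]].
  pose c0 := - (2 / jump vm vp * mean vm vp).
  pose c1 := 2 / jump vm vp.
  pose W := fun x => c0 + c1 * Vf x.
  have VE : Vf = V_of vm vp W.
    by apply/funext => x; rewrite /V_of /W /c0 /c1 /mean; field.
  have V_der : forall x : R, is_derive x 1 Vf (derive1 Vf x).
    by move=> x; apply: DeriveDef; [exact: dV | rewrite derive1E].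
  have R_der0 : forall x : R, is_derive x 1 Rf (derive1 Rf x).
    by move=> x; apply: DeriveDef; [exact: dR | rewrite derive1E].
  have W_der : forall x : R, is_derive x 1 W (c1 * derive1 Vf x).
    by move=> x; exact: (@is_derive_aff R Vf x c0 c1 _ (V_der x)).
  have W_cont : continuous W by exact: der_cont W_der.
  have mW : measurable_fun setT W by exact: continuous_measurable_fun.
  have Wp : W x @[x --> +oo] --> (1 : R).
    have H := @cvg_aff R _ _ _ _ _ c0 c1 Vp.
    rewrite (_ : c0 + c1 * vp = 1) in H; first exact: H.
    by rewrite /c0 /c1 /mean; move: jv0; rewrite /jump => jv0; field.
  have Wm : W x @[x --> -oo] --> (-1 : R).
    have H := @cvg_aff R _ _ _ _ _ c0 c1 Vm.
    rewrite (_ : c0 + c1 * vm = -1) in H; first exact: H.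
    by rewrite /c0 /c1 /mean; move: jv0; rewrite /jump => jv0; field.
  have A_der : forall x : R, is_derive x 1 (avg W) (W (x + 2^-1) - W (x - 2^-1)).
    by move=> x; exact: avg_derive.
  have A_cont : continuous (avg W) by exact: der_cont A_der.
  have RW_der : forall x : R, is_derive x 1 (R_of rm rp W) (2^-1 * jump rm rp * (W (x + 1) - W x)).
    move=> x.
    have H := @is_derive_sh R (avg W) x (2^-1) _ (A_der (x + 2^-1)).
    have := @is_derive_aff R _ x (mean rm rp) (2^-1 * jump rm rp) _ H.
    by rewrite hh1 hh2.
  have RWp : R_of rm rp W x @[x --> +oo] --> rp.
    have H := @cvg_aff R _ _ _ _ _ (mean rm rp) (2^-1 * jump rm rp) (@avg_cvgy_sh R W 1 (2^-1) mW Wp).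
    by rewrite Ep in H; exact: H.
  have RE : Rf = R_of rm rp W.
    have D0 := @zero_of_der R (fun x => Rf x - R_of rm rp W x).
    apply/funext => x; apply/eqP; rewrite -subr_eq0; apply/eqP; apply: D0.
      move=> y; apply: is_derive_eq (is_deriveB (R_der0 y) (RW_der y)) _.
      rewrite -(mulKf s0 (derive1 Rf y)).
      have -> : sigma * derive1 Rf y = Vf y - Vf (y + 1).
        by rewrite -[LHS]subr0 -(eqR y); ring.
      rewrite /W /c0 /c1 ejv; move: s0 jr0; rewrite /jump => s0 jr0; field.
      by apply/andP; split.
    have := cvgB Rp RWp; rewrite subrr; exact.
  have ARp : avg W x @[x --> +oo] --> (1 : R).
    have H := @avg_cvgy_sh R W 1 0 mW Wp.
    have E : (fun x => avg W (x + 0)) = avg W by apply/funext => y; rewrite addr0.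
    by rewrite E in H.
  pose g := fun s => ph (avg W s).
  have g_cont : continuous g by exact: (@cont_comp R (avg W) ph A_cont ph_cont).
  have gp : g x @[x --> +oo] --> (1 : R).
    have H := continuous_cvg _ (ph_cont 1) ARp.
    by rewrite ph1 in H; exact: H.
  have AGp : avg g x @[x --> +oo] --> (1 : R).
    have H := @avg_cvgy_sh R g 1 0 (continuous_measurable_fun g_cont) gp.
    have E : (fun x => avg g (x + 0)) = avg g by apply/funext => y; rewrite addr0.
    by rewrite E in H.
  have fixp : forall phi, W phi = avg g phi.
    have D0 := @zero_of_der R (fun x => W x - avg g x).
    move=> x; apply/eqP; rewrite -subr_eq0; apply/eqP; apply: D0.
      move=> y; apply: is_derive_eq (is_deriveB (W_der y) (@avg_derive R g y g_cont)) _.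
      have E1 : derive1 Phi (R_of rm rp W y) = Jp / 2 * g (y + 2^-1) + mP.
        by rewrite /R_of dPE.
      have E2 : derive1 Phi (R_of rm rp W (y - 1)) = Jp / 2 * g (y - 2^-1) + mP.
        rewrite /g -dPE /R_of.
        by congr (derive1 Phi (_ + _ * avg W _)); exact: hh3.
      have h := eqV y; rewrite RE in h.
      exact: (combine s0 jv0 eJ h E1 E2).
    have := cvgB Wp AGp; rewrite subrr; exact.
  exists W; split.
    split => //; split => //.
    + exact: bnd_aff HV.
    + by move=> phi; rewrite fixp; congr (avg _ phi); apply/funext => s; rewrite PhE.
  move=> W' [_ [_ VE']]; apply/funext => x.
  rewrite /W VE' /V_of /c0 /c1 /mean; move: jv0; rewrite /jump => jv0; field.
  exact: jv0.
Qed.
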